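(* Let $T$, $\mathcal{S}=\mathcal{S}_+\cup\mathcal{S}_-$, $\Psi$, $\lambda,\mu$, $P_\lambda,P_\mu$ and $E,F,G,H$ be as in the context, and let $R_1:=E(I-\Psi H)^{-1}$. Let $$C'_{-1}=\frac12\begin{bmatrix}0&P_{\mu+-}\\0&P_{\mu--}\end{bmatrix},\quad C'_0=\frac12\begin{bmatrix}P_{\mu++}&P_{\lambda+-}\\P_{\mu-+}&P_{\lambda--}\end{bmatrix},\quad C'_1=\frac12\begin{bmatrix}P_{\lambda++}&0\\P_{\lambda-+}&0\end{bmatrix},$$ and let $\mathcal{R}_{C'}$ be the minimal nonnegative solution of $\mathcal{R}^2C'_{-1}+\mathcal{R}C'_0+C'_1=\mathcal{R}$ (the expected-number-of-visits matrix of the QBD with these transition blocks). Then $$\mathcal{R}_{C'}=(I-C'_0)\begin{bmatrix}E&0\\H&0\end{bmatrix}\begin{bmatrix}I&R_1\Psi\\0&(I-H\Psi)^{-1}\end{bmatrix}(I-C'_0)^{-1},$$ and the spectral radius of $\mathcal{R}_{C'}$ equals $\rho(R_1)$.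
   Context: $T$ is the generator of a continuous-time Markov chain on a finite set $\mathcal{S}=\mathcal{S}_+\cup\mathcal{S}_-$ (disjoint, both nonempty), partitioned into blocks $T_{++},T_{+-},T_{-+},T_{--}$ according to $\mathcal{S}_\pm$. $\Psi$ is the minimal nonnegative solution of $T_{+-}+\Psi T_{--}+T_{++}\Psi+\Psi T_{-+}\Psi=0$ (the first-return probability matrix of the unit-rate fluid queue with phase generator $T$, rates $+1$ on $\mathcal{S}_+$ and $-1$ on $\mathcal{S}_-$). $\lambda,\mu>0$ satisfy $\lambda,\mu\ge\max_i|T_{ii}|$; $P_\lambda:=I+\lambda^{-1}T$, $P_\mu:=I+\mu^{-1}T$ with blocks $P_{\lambda++}$ etc. The matrices $E,G,H,F$ are defined by $\begin{bmatrix}E&G\\H&F\end{bmatrix}=\begin{bmatrix}I-\mu^{-1}T_{++}&-\lambda^{-1}T_{+-}\\-\mu^{-1}T_{-+}&I-\lambda^{-1}T_{--}\end{bmatrix}^{-1}\begin{bmatrix}I+\lambda^{-1}T_{++}&\mu^{-1}T_{+-}\\\lambda^{-1}T_{-+}&I+\mu^{-1}T_{--}\end{bmatrix}$, with $E$ of size $|\mathcal{S}_+|\times|\mathcal{S}_+|$ and $F$ of size $|\mathcal{S}_-|\times|\mathcal{S}_-|$. $\rho(\cdot)$ denotes spectral radius. *)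

(* Defs.v *)
From HB Require Import structures.
From mathcomp Require Import all_boot all_order all_algebra.
From mathcomp Require Import complex.
From mathcomp Require Import classical_sets reals.
Set Implicit Arguments. Unset Strict Implicit. Unset Printing Implicit Defensive.
Import Order.TTheory GRing.Theory Num.Theory.
Local Open Scope ring_scope.

Definition mx_nonneg (R : realType) m n (A : 'M[R]_(m, n)) : Prop :=
  forall i j, 0 <= A i j.
Definition mx_le (R : realType) m n (A B : 'M[R]_(m, n)) : Prop :=
  forall i j, A i j <= B i j.

Definition is_min_nonneg_sol (R : realType) m n
    (eqn : 'M[R]_(m, n) -> 'M[R]_(m, n)) (X : 'M[R]_(m, n)) : Prop :=
  [/\ mx_nonneg X, eqn X = 0 &
      forall Y, mx_nonneg Y -> eqn Y = 0 -> mx_le X Y].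

Definition is_generator (R : realType) n (T : 'M[R]_n) : Prop :=
  (forall i j, i != j -> 0 <= T i j) /\ (forall i, \sum_j T i j = 0).

Definition spectral_radius (R : realType) n (A : 'M[R]_n) : R :=
  sup [set r : R | exists z : R[i],
         eigenvalue (map_mx (fun x : R => x%:C%C) A) z /\ r = Normc.normc z].

Definition Pmx (R : realType) n (a : R) (T : 'M[R]_n) : 'M[R]_n :=
  1%:M + a^-1 *: T.

(* the matrix [E G; H F] of the context, for T partitioned as (p + m) *)
Definition EGHF (R : realType) p m (lam mu : R) (T : 'M[R]_(p + m))
    : 'M[R]_(p + m) :=
  let Tpp := ulsubmx T in let Tpm := ursubmx T in
  let Tmp := dlsubmx T in let Tmm := drsubmx T in
  invmx (block_mx (1%:M - mu^-1 *: Tpp) (- (lam^-1 *: Tpm))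
                  (- (mu^-1 *: Tmp)) (1%:M - lam^-1 *: Tmm))
  *m block_mx (1%:M + lam^-1 *: Tpp) (mu^-1 *: Tpm)
              (lam^-1 *: Tmp) (1%:M + mu^-1 *: Tmm).

(* Main.v *)
Require Import Defs.
From HB Require Import structures.
From mathcomp Require Import all_boot all_order all_algebra.
From mathcomp Require Import complex.
From mathcomp Require Import classical_sets reals.
From mathcomp Require Import boolp topology normedtype sequences.
From mathcomp Require Import ring lra.
Import Order.TTheory GRing.Theory Num.Theory.
Local Open Scope ring_scope.
Set Implicit Arguments. Unset Strict Implicit. Unset Printing Implicit Defensive.
Section Basic.
Variable R : realType.
Implicit Types a b c : nat.

Lemma nn0 a b : mx_nonneg (0 : 'M[R]_(a,b)).
Proof. by move=> i j; rewrite mxE. Qed.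
Lemma nn1 a : mx_nonneg (1%:M : 'M[R]_a).
Proof. by move=> i j; rewrite mxE ler0n. Qed.
Lemma nnD a b (A B : 'M[R]_(a,b)) : mx_nonneg A -> mx_nonneg B -> mx_nonneg (A + B).
Proof. by move=> hA hB i j; rewrite mxE addr_ge0. Qed.
Lemma nnM a b c (A : 'M[R]_(a,b)) (B : 'M[R]_(b,c)) :
  mx_nonneg A -> mx_nonneg B -> mx_nonneg (A *m B).
Proof. by move=> hA hB i j; rewrite mxE sumr_ge0 // => k _; rewrite mulr_ge0. Qed.
Lemma nnZ a b (x : R) (A : 'M[R]_(a,b)) : 0 <= x -> mx_nonneg A -> mx_nonneg (x *: A).
Proof. by move=> hx hA i j; rewrite mxE mulr_ge0. Qed.
Lemma le_refl a b (A : 'M[R]_(a,b)) : mx_le A A.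
Proof. by move=> i j. Qed.
Lemma le_trans a b (A B C : 'M[R]_(a,b)) : mx_le A B -> mx_le B C -> mx_le A C.
Proof. by move=> h1 h2 i j; apply: Order.POrderTheory.le_trans (h1 i j) (h2 i j). Qed.
Lemma le_anti a b (A B : 'M[R]_(a,b)) : mx_le A B -> mx_le B A -> A = B.
Proof. by move=> h1 h2; apply/matrixP => i j; apply/eqP; rewrite eq_le h1 h2. Qed.
Lemma leD a b (A A' B B' : 'M[R]_(a,b)) : mx_le A A' -> mx_le B B' -> mx_le (A + B) (A' + B').
Proof. by move=> h1 h2 i j; rewrite !mxE lerD. Qed.
Lemma le_mull a b c (C : 'M[R]_(a,b)) (A B : 'M[R]_(b,c)) :
  mx_nonneg C -> mx_le A B -> mx_le (C *m A) (C *m B).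
Proof.
by move=> hC h i j; rewrite !mxE; apply: ler_sum => k _; rewrite ler_wpM2l.
Qed.
Lemma le_mulr a b c (C : 'M[R]_(b,c)) (A B : 'M[R]_(a,b)) :
  mx_nonneg C -> mx_le A B -> mx_le (A *m C) (B *m C).
Proof.
by move=> hC h i j; rewrite !mxE; apply: ler_sum => k _; rewrite ler_wpM2r.
Qed.
Lemma le_mul2 a b c (A A' : 'M[R]_(a,b)) (B B' : 'M[R]_(b,c)) :
  mx_nonneg A -> mx_nonneg B' -> mx_le A A' -> mx_le B B' -> mx_le (A *m B) (A' *m B').
Proof.
move=> hA hB' h1 h2; exact: le_trans (le_mull hA h2) (le_mulr hB' h1).
Qed.
Lemma nn_le a b (A : 'M[R]_(a,b)) : mx_nonneg A <-> mx_le 0 A.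
Proof. by split=> h i j; move: (h i j); rewrite mxE. Qed.
Lemma nn_le_trans a b (A B : 'M[R]_(a,b)) : mx_nonneg A -> mx_le A B -> mx_nonneg B.
Proof. by move=> hA h i j; apply: Order.POrderTheory.le_trans (hA i j) (h i j). Qed.
Lemma nn_ul a1 a2 b1 b2 (A : 'M[R]_(a1+a2,b1+b2)) : mx_nonneg A -> mx_nonneg (ulsubmx A).
Proof. by move=> h i j; rewrite !mxE; apply: h. Qed.
Lemma nn_ur a1 a2 b1 b2 (A : 'M[R]_(a1+a2,b1+b2)) : mx_nonneg A -> mx_nonneg (ursubmx A).
Proof. by move=> h i j; rewrite !mxE; apply: h. Qed.
Lemma nn_dl a1 a2 b1 b2 (A : 'M[R]_(a1+a2,b1+b2)) : mx_nonneg A -> mx_nonneg (dlsubmx A).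
Proof. by move=> h i j; rewrite !mxE; apply: h. Qed.
Lemma nn_dr a1 a2 b1 b2 (A : 'M[R]_(a1+a2,b1+b2)) : mx_nonneg A -> mx_nonneg (drsubmx A).
Proof. by move=> h i j; rewrite !mxE; apply: h. Qed.
Lemma nn_u a1 a2 b (A : 'M[R]_(a1+a2,b)) : mx_nonneg A -> mx_nonneg (usubmx A).
Proof. by move=> h i j; rewrite !mxE; apply: h. Qed.
Lemma nn_d a1 a2 b (A : 'M[R]_(a1+a2,b)) : mx_nonneg A -> mx_nonneg (dsubmx A).
Proof. by move=> h i j; rewrite !mxE; apply: h. Qed.
Lemma nn_col a1 a2 b (A : 'M[R]_(a1,b)) (B : 'M[R]_(a2,b)) :
  mx_nonneg A -> mx_nonneg B -> mx_nonneg (col_mx A B).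
Proof. by move=> hA hB i j; rewrite mxE; case: splitP => k _; [apply: hA|apply: hB]. Qed.
Lemma nn_row a b1 b2 (A : 'M[R]_(a,b1)) (B : 'M[R]_(a,b2)) :
  mx_nonneg A -> mx_nonneg B -> mx_nonneg (row_mx A B).
Proof. by move=> hA hB i j; rewrite mxE; case: splitP => k _; [apply: hA|apply: hB]. Qed.

Lemma leZ a b (c : R) (A B : 'M[R]_(a,b)) : 0 <= c -> mx_le A B -> mx_le (c *: A) (c *: B).
Proof. by move=> hc h i j; rewrite !mxE ler_wpM2l. Qed.

Lemma mxD_entry a b (A B : 'M[R]_(a,b)) i j : (A + B) i j = A i j + B i j.
Proof. by rewrite mxE. Qed.
Lemma mxZ_entry a b (c : R) (A : 'M[R]_(a,b)) i j : (c *: A) i j = c * A i j.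
Proof. by rewrite mxE. Qed.

Lemma zmx_pos k (A : 'M[R]_k) (v : 'cV[R]_k) :
  (forall i j, i != j -> A i j <= 0) -> (forall i, 0 < v i 0) ->
  (forall i, 0 < (A *m v) i 0) ->
  forall x : 'cV[R]_k, mx_nonneg (A *m x) -> mx_nonneg x.
Proof.
move=> hA hv hAv x hx i0 j0; rewrite (ord1 j0).
case: (leP 0 (x i0 0)) => // xneg; exfalso.
pose F := fun i => x i 0 / v i 0.
have [i _ imin] := @arg_minP _ R _ i0 xpredT F isT.
set t := F i in imin.
have tneg : t < 0.
  apply: (Order.POrderTheory.le_lt_trans (imin i0 isT)).
  by rewrite /F pmulr_llt0 ?invr_gt0.
have xge : forall j, t * v j 0 <= x j 0.
  move=> j; have := imin j isT; rewrite /F ler_pdivlMr //.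
have xi : x i 0 = t * v i 0 by rewrite /t /F mulrVK // unitfE gt_eqF.
have : (A *m x) i 0 <= t * (A *m v) i 0.
  rewrite !mxE mulr_sumr; apply: ler_sum => j _.
  have [->|ne] := eqVneq j i; first by rewrite xi mulrCA.
  rewrite mulrCA; apply: ler_wnM2l; [by apply: hA; rewrite eq_sym | exact: xge].
rewrite leNgt => /negP; apply.
apply: (Order.POrderTheory.lt_le_trans _ (hx i 0)).
by rewrite nmulr_rlt0 // hAv.
Qed.

Lemma zmx_inv k (A : 'M[R]_k) (v : 'cV[R]_k) :
  (forall i j, i != j -> A i j <= 0) -> (forall i, 0 < v i 0) ->
  (forall i, 0 < (A *m v) i 0) ->
  A \in unitmx /\ mx_nonneg (invmx A).
Proof.
move=> hA hv hAv; have key := zmx_pos hA hv hAv.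
have unitA : A \in unitmx.
  rewrite -unitmx_tr -row_free_unit; apply: inj_row_free => w hw.
  have h0 : A *m w^T = 0 by rewrite -[A]trmxK -trmx_mul hw trmx0.
  have n1 : mx_nonneg w^T by apply: key; rewrite h0; exact: nn0.
  have n2 : mx_nonneg (- w^T) by apply: key; rewrite mulmxN h0 oppr0; exact: nn0.
  apply/matrixP => i j; apply/eqP; rewrite mxE eq_le.
  have := n1 j i; have := n2 j i; rewrite !mxE oppr_ge0 => -> ->; done.
split=> // i j.
have : mx_nonneg (A *m col j (invmx A)).
  by rewrite colE mulmxA mulmxV // mul1mx => a b; rewrite mxE; case: (_ == _); rewrite ?ler01 ?lexx // ?mulr0n ?mulr1n.
move/key => /(_ i 0); rewrite mxE //.
Qed.
End Basic.
Section Lim.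
Variable R : realType.
Local Open Scope classical_set_scope.
Import numFieldNormedType.Exports.

Definition mcvg a b (X : nat -> 'M[R]_(a,b)) (L : 'M[R]_(a,b)) :=
  forall i j, (fun k => X k i j) @ \oo --> L i j.

Lemma mcvg_cst a b (L : 'M[R]_(a,b)) : mcvg (fun _ => L) L.
Proof. by move=> i j; exact: cvg_cst. Qed.

Lemma mcvgD a b (X Y : nat -> 'M[R]_(a,b)) L M :
  mcvg X L -> mcvg Y M -> mcvg (fun k => X k + Y k) (L + M).
Proof.
move=> hX hY i j; rewrite mxE.
have -> : (fun k => (X k + Y k) i j) = (fun k => X k i j) \+ (fun k => Y k i j).
  by apply/funext => k; rewrite !mxE.
exact: cvgD.
Qed.

Lemma cvg_sumI (k : nat) (u : 'I_k -> nat -> R) (l : 'I_k -> R) :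
  (forall i, u i @ \oo --> l i) ->
  (fun n => \sum_(i < k) u i n) @ \oo --> \sum_(i < k) l i.
Proof.
move=> h; apply: (@cvg_big R^o _ +%R 0 xpredT add_continuous) => //.
Qed.

Lemma mcvgM a b c (X : nat -> 'M[R]_(a,b)) (Y : nat -> 'M[R]_(b,c)) L M :
  mcvg X L -> mcvg Y M -> mcvg (fun k => X k *m Y k) (L *m M).
Proof.
move=> hX hY i j; rewrite mxE.
have -> : (fun k => (X k *m Y k) i j) = (fun n => \sum_(l < b) ((fun k => X k i l) \* (fun k => Y k l j)) n).
  by apply/funext => k; rewrite !mxE.
apply: cvg_sumI => l; exact: cvgM.
Qed.

Lemma mcvg_le a b (X : nat -> 'M[R]_(a,b)) L B :
  mcvg X L -> (forall k, mx_le (X k) B) -> mx_le L B.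
Proof.
move=> hX hB i j; apply: (ler_cvg_to (hX i j) (cvg_cst (B i j))).
by near=> k; exact: hB.
Unshelve. all: by end_near.
Qed.

Lemma mcvg_ge a b (X : nat -> 'M[R]_(a,b)) L B :
  mcvg X L -> (forall k, mx_le B (X k)) -> mx_le B L.
Proof.
move=> hX hB i j; apply: (ler_cvg_to (cvg_cst (B i j)) (hX i j)).
by near=> k; exact: hB.
Unshelve. all: by end_near.
Qed.

Lemma mcvg_uniq a b (X : nat -> 'M[R]_(a,b)) L M : mcvg X L -> mcvg X M -> L = M.
Proof.
move=> h1 h2; apply/matrixP => i j; exact: (cvg_unique _ (h1 i j) (h2 i j)).
Qed.

Lemma mcvg_shift a b (X : nat -> 'M[R]_(a,b)) L : mcvg X L -> mcvg (fun k => X k.+1) L.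
Proof. by move=> h i j; have := h i j; rewrite -cvg_shiftS. Qed.

Lemma mono_mcvg a b (X : nat -> 'M[R]_(a,b)) B :
  (forall k, mx_le (X k) (X k.+1)) -> (forall k, mx_le (X k) B) ->
  exists L, mcvg X L.
Proof.
move=> hinc hB.
exists (\matrix_(i, j) sup (range (fun k => X k i j))) => i j; rewrite mxE.
apply: nondecreasing_cvgn.
  apply: (@homo_leq _ (fun k => X k i j) (fun x y => x <= y)).
  - by move=> x.
  - by move=> y x z; apply: Order.POrderTheory.le_trans.
  - by move=> k; exact: hinc.
by exists (B i j) => _ [k _ <-]; exact: hB.
Qed.

Lemma iter_lim a b (f : 'M[R]_(a,b) -> 'M[R]_(a,b)) (B : 'M[R]_(a,b)) :
  (forall X Y, mx_nonneg X -> mx_le X Y -> mx_le (f X) (f Y)) ->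
  (forall X, mx_nonneg X -> mx_nonneg (f X)) ->
  (forall X L, mcvg X L -> mcvg (fun k => f (X k)) (f L)) ->
  mx_nonneg B -> f B = B ->
  exists L, [/\ mcvg (fun k => iter k f 0) L, mx_nonneg L, mx_le L B & f L = L].
Proof.
move=> mono nnf cont nnB fB.
have nnX : forall k, mx_nonneg (iter k f 0).
  by elim=> [|k IH] /=; [exact: nn0 | exact: nnf].
have inc : forall k, mx_le (iter k f 0) (iter k.+1 f 0).
  elim=> [|k IH] /=; first by apply/nn_le; apply: nnf; exact: nn0.
  by apply: mono.
have bnd : forall k, mx_le (iter k f 0) B.
  elim=> [|k IH] /=; first by apply/nn_le.
  by rewrite -fB; apply: mono.
have [L hL] := mono_mcvg inc bnd.
exists L; split => //.
- by apply/nn_le; apply: mcvg_ge hL _ => k; apply/nn_le.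
- exact: mcvg_le hL bnd.
- apply: (mcvg_uniq (cont _ _ hL)).
  exact: (mcvg_shift hL).
Qed.
End Lim.

Section Lim2.
Variable R : realType.
Local Open Scope classical_set_scope.
Import numFieldNormedType.Exports.
Lemma mcvgZ a b (c : R) (X : nat -> 'M[R]_(a,b)) L :
  mcvg X L -> mcvg (fun k => c *: X k) (c *: L).
Proof.
move=> hX i j; rewrite mxE.
have -> : (fun k => (c *: X k) i j) = (fun _ => c) \* (fun k => X k i j).
  by apply/funext => k; rewrite !mxE.
apply: cvgM => //; exact: cvg_cst.
Qed.
Lemma mcvgMl a b c (C : 'M[R]_(a,b)) (X : nat -> 'M[R]_(b,c)) L :
  mcvg X L -> mcvg (fun k => C *m X k) (C *m L).
Proof. by move=> h; apply: mcvgM h; exact: mcvg_cst. Qed.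
Lemma mcvgMr a b c (C : 'M[R]_(b,c)) (X : nat -> 'M[R]_(a,b)) L :
  mcvg X L -> mcvg (fun k => X k *m C) (L *m C).
Proof. by move=> h; apply: mcvgM h _; exact: mcvg_cst. Qed.
End Lim2.
Section Lim3.
Variable R : realType.
Local Open Scope classical_set_scope.
Import numFieldNormedType.Exports.
Lemma mcvg_entry a b (X : nat -> 'M[R]_(a,b)) L i j c :
  mcvg X L -> (forall n, X n i j = c) -> L i j = c.
Proof.
move=> h hc; have e : (fun n => X n i j) = (fun _ => c) by apply/funext.
have := h i j; rewrite e => h'; exact: (cvg_unique _ h' (cvg_cst c)).
Qed.
End Lim3.

Section Setup.
Variables (R : realType) (p m : nat) (T : 'M[R]_(p + m)) (lam mu : R).
Hypothesis genT : is_generator T.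
Hypotheses (hl : 0 < lam) (hm : 0 < mu).
Hypotheses (Tl : forall i, `|T i i| <= lam) (Tm : forall i, `|T i i| <= mu).

Ltac fsolve3 := field; rewrite ?(lt0r_neq0 hm) ?(lt0r_neq0 hl) ?pnatr_eq0 ?andbT //.

Definition C0d : 'M[R]_(p+m) := 2^-1 *: block_mx (ulsubmx (Pmx mu T)) (ursubmx (Pmx lam T))
                             (dlsubmx (Pmx mu T)) (drsubmx (Pmx lam T)).
Definition C1d : 'M[R]_(p+m) := 2^-1 *: block_mx (ulsubmx (Pmx lam T)) 0 (dlsubmx (Pmx lam T)) 0.
Definition Cm1d : 'M[R]_(p+m) := 2^-1 *: block_mx 0 (ursubmx (Pmx mu T)) 0 (drsubmx (Pmx mu T)).
Definition Amx : 'M[R]_(p+m) := 1%:M - C0d.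
Definition Cc := 2^-1 *: col_mx (ulsubmx (Pmx lam T)) (dlsubmx (Pmx lam T)).
Definition Dc := 2^-1 *: col_mx (ursubmx (Pmx mu T)) (drsubmx (Pmx mu T)).
Definition wt (j : 'I_(p+m)) : R := if (j < p)%N then mu^-1 else lam^-1.
Definition vt (j : 'I_(p+m)) : R := if (j < p)%N then mu else lam.

Lemma PmxE a i j : Pmx a T i j = (i == j)%:R + a^-1 * T i j.
Proof. by rewrite /Pmx !mxE. Qed.

Lemma C0E i j : C0d i j = 2^-1 * ((i == j)%:R + wt j * T i j).
Proof.
rewrite /C0d /wt mxE.
case: (split_ordP i) => i' ->; case: (split_ordP j) => j' ->;
rewrite ?block_mxEul ?block_mxEur ?block_mxEdl ?block_mxEdr !mxE ?eq_shift //=.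
all: try by rewrite ltn_ord.
all: try by rewrite ltnNge leq_addr.
Qed.

Lemma C1E i j : C1d i j = if (j < p)%N then 2^-1 * Pmx lam T i j else 0.
Proof.
rewrite /C1d mxE.
case: (split_ordP i) => i' ->; case: (split_ordP j) => j' ->;
rewrite ?block_mxEul ?block_mxEur ?block_mxEdl ?block_mxEdr ?mxE /= ?ltn_ord
  ?(ltnNge p (p + _)) ?leq_addr ?mulr0 //.
Qed.

Lemma Cm1E i j : Cm1d i j = if (j < p)%N then 0 else 2^-1 * Pmx mu T i j.
Proof.
rewrite /Cm1d mxE.
case: (split_ordP i) => i' ->; case: (split_ordP j) => j' ->;
rewrite ?block_mxEul ?block_mxEur ?block_mxEdl ?block_mxEdr ?mxE /= ?ltn_ord
  ?(ltnNge p (p + _)) ?leq_addr ?mulr0 //.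
Qed.

Lemma nnPmx a : 0 < a -> (forall i, `|T i i| <= a) -> mx_nonneg (Pmx a T).
Proof.
move=> ha hT i j; rewrite PmxE; have [->|ne] := eqVneq i j.
  rewrite mulr1n; have := hT j; rewrite ler_norml => /andP[h _].
  have h2 : 0 <= a + T j j by lra.
  have -> : 1 + a^-1 * T j j = a^-1 * (a + T j j) by rewrite mulrDr mulVf // lt0r_neq0.
  by rewrite mulr_ge0 // invr_ge0 ltW.
rewrite mulr0n add0r; apply: mulr_ge0; first by rewrite invr_ge0 ltW.
by case: genT => h _; apply: h.
Qed.

Lemma rowsumT i : \sum_j T i j = 0.
Proof. by case: genT => _ ->. Qed.

Lemma rowsumPmx a i : \sum_j Pmx a T i j = 1.
Proof.
under eq_bigr do rewrite PmxE.
rewrite big_split /= -mulr_sumr rowsumT mulr0 addr0.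
rewrite (bigD1 i) //= eqxx big1 ?addr0 // => j /negPf; rewrite eq_sym => ->; done.
Qed.

Lemma nnC0 : mx_nonneg C0d.
Proof.
move=> i j; rewrite C0E; have := nnPmx hm Tm i j; have := nnPmx hl Tl i j.
rewrite /wt !PmxE; case: (j < p)%N => h1 h2; rewrite mulr_ge0 // invr_ge0 ler0n //.
Qed.

Lemma nnC1 : mx_nonneg C1d.
Proof.
move=> i j; rewrite C1E; case: (j < p)%N => //; rewrite mulr_ge0 ?invr_ge0 ?ler0n //.
exact: nnPmx.
Qed.

Lemma nnCm1 : mx_nonneg Cm1d.
Proof.
move=> i j; rewrite Cm1E; case: (j < p)%N => //; rewrite mulr_ge0 ?invr_ge0 ?ler0n //.
exact: nnPmx.
Qed.

Lemma AmxE i j : Amx i j = (i == j)%:R - C0d i j.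
Proof. by rewrite /Amx mxE [1%:M i j]mxE [(- C0d) i j]mxE. Qed.

Lemma Amx_inv : Amx \in unitmx /\ mx_nonneg (invmx Amx).
Proof.
apply: (@zmx_inv _ _ _ (\col_i vt i)).
- move=> i j ne; rewrite AmxE (negPf ne) sub0r oppr_le0; exact: nnC0.
- by move=> i; rewrite mxE /vt; case: (i < p)%N.
move=> i; rewrite /Amx mulmxBl mul1mx mxE. rewrite mxE. rewrite mxE. rewrite mxE.
have -> : \sum_j C0d i j * (\col_i0 vt i0) j 0 = 2^-1 * vt i.
  under eq_bigr do rewrite C0E mxE -mulrA mulrDl.
  rewrite -mulr_sumr big_split /=.
  have -> : \sum_j wt j * T i j * vt j = \sum_j T i j.
    by apply: eq_bigr => j _; rewrite mulrAC /wt /vt; case: (j < p)%N; rewrite mulVf ?mul1r // lt0r_neq0.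
  rewrite rowsumT addr0 (bigD1 i) //= eqxx mul1r big1 ?addr0 // => j /negPf.
  by rewrite eq_sym => ->; rewrite mul0r.
have hv : 0 < vt i by rewrite /vt; case: (i < p)%N.
rewrite -{1}(mul1r (vt i)) -mulrBl; apply: mulr_gt0 => //; lra.
Qed.

Lemma C1_row : C1d = row_mx Cc 0.
Proof. by rewrite /C1d /Cc block_mxEh col_mx0 scale_row_mx scaler0. Qed.

Lemma Cm1_row : Cm1d = row_mx 0 Dc.
Proof. by rewrite /Cm1d /Dc block_mxEh col_mx0 scale_row_mx scaler0. Qed.

Lemma rowsum_C i : \sum_j (C0d + C1d + Cm1d) i j = 1.
Proof.
have -> : \sum_j (C0d + C1d + Cm1d) i j = 2^-1 * (\sum_j Pmx lam T i j + \sum_j Pmx mu T i j).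
  rewrite -big_split mulr_sumr; apply: eq_bigr => j _ /=.
  rewrite mxE mxE C0E C1E Cm1E /wt !PmxE.
  by case: (j < p)%N; fsolve3.
rewrite !rowsumPmx; fsolve3.
Qed.

Definition Lmat : 'M[R]_(p+m) := block_mx (1%:M - mu^-1 *: ulsubmx T) (- (lam^-1 *: ursubmx T))
                  (- (mu^-1 *: dlsubmx T)) (1%:M - lam^-1 *: drsubmx T).
Definition Rmat : 'M[R]_(p+m) := block_mx (1%:M + lam^-1 *: ulsubmx T) (mu^-1 *: ursubmx T)
              (lam^-1 *: dlsubmx T) (1%:M + mu^-1 *: drsubmx T).

Lemma LmatE : Lmat = 2 *: Amx.
Proof.
apply/matrixP => i j; rewrite [in RHS]mxE AmxE C0E /wt /Lmat.
case: (split_ordP i) => i' ->; case: (split_ordP j) => j' ->;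
rewrite ?block_mxEul ?block_mxEur ?block_mxEdl ?block_mxEdr !mxE ?eq_shift /= ?ltn_ord
  ?(ltnNge p (p + _)) ?leq_addr /=; fsolve3.
Qed.

Lemma RmatE : Rmat = 2 *: row_mx Cc Dc.
Proof.
apply/matrixP => i j; rewrite /Rmat /Cc /Dc [in RHS]mxE.
case: (split_ordP i) => i' ->; case: (split_ordP j) => j' ->;
rewrite ?block_mxEul ?block_mxEur ?block_mxEdl ?block_mxEdr ?row_mxEl ?row_mxEr
  [in RHS]mxE ?col_mxEu ?col_mxEd !mxE ?eq_shift /=; fsolve3.
Qed.

Lemma EGHFE : EGHF lam mu T = invmx Amx *m row_mx Cc Dc.
Proof.
rewrite /EGHF -/Lmat -/Rmat LmatE RmatE invmxZ; last first.
  rewrite unitmxZ; first by case: Amx_inv.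
  by rewrite unitfE pnatr_eq0.
by rewrite -scalemxAl -scalemxAr scalerA mulVf ?pnatr_eq0 // scale1r.
Qed.
End Setup.

Ltac atomize :=
  repeat match goal with |- context [?a *m ?b] =>
    let z := fresh "z" in set z := a *m b; clearbody z end.

Ltac mxnorm := do 3 (rewrite ?mulmxDr ?mulmxDl ?mulmxBr ?mulmxBl ?mulmx1 ?mul1mx
  -?scalemxAr -?scalemxAl ?mulmxA ?mulNmx ?mulmxN ?scalerDr ?scalerBr ?scaleNr ?scalerN ?scalerA).

Section Alg.
Variables (R : realType) (p m : nat) (T : 'M[R]_(p + m)) (lam mu : R).
Hypotheses (hl : 0 < lam) (hm : 0 < mu).
Ltac fsolve4 := field; rewrite ?(lt0r_neq0 hm) ?(lt0r_neq0 hl) ?pnatr_eq0 ?andbT //.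

Local Notation Tpp := (ulsubmx T).
Local Notation Tpm := (ursubmx T).
Local Notation Tmp := (dlsubmx T).
Local Notation Tmm := (drsubmx T).

Lemma PmxB a : Pmx a T = block_mx (1%:M + a^-1 *: Tpp) (a^-1 *: Tpm) (a^-1 *: Tmp) (1%:M + a^-1 *: Tmm).
Proof.
by rewrite /Pmx -{1}[T]submxK (scalar_mx_block p m) scale_block_mx add_block_mx ?addr0 ?add0r.
Qed.

Definition Ric (Y : 'M[R]_(p,m)) := Tpm + Y *m Tmm + Tpp *m Y + Y *m Tmp *m Y.
Definition fPsi (Y : 'M[R]_(p,m)) := 2^-1 *: (ursubmx (Pmx lam T) + Y *m drsubmx (Pmx lam T)
   + ulsubmx (Pmx lam T) *m Y + Y *m dlsubmx (Pmx lam T) *m Y).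

Lemma fPsiE Y : fPsi Y = Y + (2 * lam)^-1 *: Ric Y.
Proof.
rewrite /fPsi /Ric PmxB block_mxKul block_mxKur block_mxKdl block_mxKdr.
mxnorm. atomize. apply/matrixP => i j; rewrite !mxE; fsolve4.
Qed.

Definition Ux (Y : 'M[R]_(p,m)) := Tmp *m Y + Tmm.
Definition cx Y : 'M[R]_m := 1%:M - lam^-1 *: Ux Y.
Definition dx Y : 'M[R]_m := 1%:M + mu^-1 *: Ux Y.

Lemma GEN (Y : 'M[R]_(p,m)) (Q : 'M[R]_m) :
  Lmat T lam mu *m col_mx Y Q - Rmat T lam mu *m col_mx (Y *m Q) 1%:M =
  col_mx (- (Ric Y *m (mu^-1 *: 1%:M + lam^-1 *: Q)) - Y *m (cx Y *m Q - dx Y))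
         (cx Y *m Q - dx Y).
Proof.
rewrite /Lmat /Rmat !mul_block_col opp_col_mx add_col_mx; congr col_mx.
  rewrite /Ric /cx /dx /Ux.
  mxnorm. atomize. apply/matrixP => i j; rewrite !mxE; fsolve4.
rewrite /cx /dx /Ux.
mxnorm. atomize. apply/matrixP => i j; rewrite !mxE; fsolve4.
Qed.
End Alg.

Section P4.
Variables (R : realType) (p m : nat).
Local Notation one k := (const_mx 1 : 'cV[R]_k).

Lemma sum_ge0_eq0 k (f : 'I_k -> R) : (forall i, 0 <= f i) -> \sum_i f i = 0 -> forall i, f i = 0.
Proof. by move=> h0 hs i; apply: (psumr_eq0P (P := xpredT)) => // j _; exact: h0. Qed.

Lemma rsum' a b (X : 'M[R]_(a,b)) i j : (X *m one b) i j = \sum_k X i k.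
Proof. by rewrite mxE; apply: eq_bigr => k _; rewrite mxE mulr1. Qed.

Lemma one_entry k (i : 'I_k) : one k i 0 = 1. Proof. by rewrite mxE. Qed.

Lemma closure_gen (Tpp : 'M[R]_p) (Tpm : 'M[R]_(p,m)) (G : 'M[R]_(p,m)) (F : 'M[R]_m) (mu lam : R) :
  0 < mu -> 0 < lam -> (forall k l, k != l -> 0 <= Tpp k l) -> mx_nonneg Tpm ->
  mx_nonneg G -> mx_nonneg F ->
  G - mu^-1 *: (Tpp *m G) - lam^-1 *: (Tpm *m F) = mu^-1 *: Tpm ->
  forall k, (forall j, G k j = 0) ->
    (forall j, Tpm k j = 0) /\ (forall l, Tpp k l != 0 -> forall j, G l j = 0).
Proof.
move=> hm hl hTpp hTpm hG hF e k hk.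
have key : forall j, Tpm k j = 0 /\ forall l, Tpp k l * G l j = 0.
  move=> j; have := congr1 (fun X : 'M[R]_(p,m) => X k j) e; rewrite /= !mxE hk.
  set s1 := \sum_l _; set s2 := \sum_l _ => h.
  have s1ge : 0 <= s1.
    apply: sumr_ge0 => l _; have [<-|ne] := eqVneq k l; first by rewrite hk mulr0.
    by rewrite mulr_ge0 // hTpp.
  have s2ge : 0 <= s2 by apply: sumr_ge0 => l _; rewrite mulr_ge0.
  have a1 : 0 <= mu^-1 * s1 by rewrite mulr_ge0 // invr_ge0 ltW.
  have a2 : 0 <= lam^-1 * s2 by rewrite mulr_ge0 // invr_ge0 ltW.
  have a3 : 0 <= mu^-1 * Tpm k j by rewrite mulr_ge0 // invr_ge0 ltW.
  have z1 : mu^-1 * s1 = 0 by lra.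
  have z3 : mu^-1 * Tpm k j = 0 by lra.
  have {}z1 : s1 = 0 by apply/eqP; move/eqP: z1; rewrite mulf_eq0 invr_eq0 (gt_eqF hm).
  have {}z3 : Tpm k j = 0 by apply/eqP; move/eqP: z3; rewrite mulf_eq0 invr_eq0 (gt_eqF hm).
  split=> // l; apply: (sum_ge0_eq0 _ z1) => l'.
  have [<-|ne] := eqVneq k l'; first by rewrite hk mulr0.
  by rewrite mulr_ge0 // hTpp.
split=> [j|l hl0 j]; first by case: (key j).
have := (key j).2 l; move/eqP; rewrite mulf_eq0 (negPf hl0) /= => /eqP //.
Qed.

Lemma pick_pos k (f : 'I_k -> R) : (forall i, 0 <= f i) -> 0 < \sum_i f i -> exists i, 0 < f i.
Proof.
move=> h0 hs; case: (pickP (fun i => 0 < f i)) => [i hi|hn]; first by exists i.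
exfalso; move: hs; rewrite big1 ?ltxx // => i _.
by apply/eqP; rewrite eq_le h0 andbT leNgt hn.
Qed.

Lemma p4_gen (Psi : 'M[R]_(p,m)) (H : 'M[R]_(m,p)) (F : 'M[R]_m) (G : 'M[R]_(p,m))
  (Tpp : 'M[R]_p) (Tmp : 'M[R]_(m,p)) (Tmm : 'M[R]_m) (mu lam : R) :
  0 < mu -> 0 < lam ->
  mx_nonneg Psi -> mx_nonneg H -> mx_nonneg F -> mx_nonneg G -> mx_nonneg Tmp ->
  (forall k l, k != l -> 0 <= Tpp k l) -> (forall k l, k != l -> 0 <= Tmm k l) ->
  H *m one p + F *m one m = one m ->
  mx_le (Psi *m one m) (one p) ->
  Tpp *m (one p - Psi *m one m) + Psi *m (Tmp *m (one p - Psi *m one m)) = 0 ->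
  Tmp *m one p + Tmm *m one m = 0 ->
  - (mu^-1 *: (Tmp *m G)) + F - lam^-1 *: (Tmm *m F) = 1%:M + mu^-1 *: Tmm ->
  (forall j, -mu <= Tmm j j) ->
  (forall l, (forall j, G l j = 0) -> forall j, Psi l j = 0) ->
  forall i, (Psi *m (H *m one p)) i 0 < 1.
Proof.
move=> hm hl nPsi nH nF nG nTmp hTpp hTmm HF Psi1 Ric1 Trow emm Tdiag Sinv i.
rewrite ltNge; apply/negP => hge.
have hF1 : forall j, (H *m one p) j 0 + \sum_l F j l = 1.
  move=> j; have := congr1 (fun X : 'cV[R]_m => X j 0) HF; rewrite /= [in X in X -> _]mxE.
  by rewrite (rsum' F) one_entry.
have h1le : forall j, (H *m one p) j 0 <= 1.
  move=> j; have := hF1 j; have : 0 <= \sum_l F j l by apply: sumr_ge0 => l _; exact: nF.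
  lra.
have h1ge : forall j, 0 <= (H *m one p) j 0.
  by move=> j; rewrite rsum' sumr_ge0 // => l _; exact: nH.
set h1 := H *m one p in hF1 h1le h1ge hge.
have sPsi : forall l, \sum_j Psi l j <= 1.
  by move=> l; have := Psi1 l 0; rewrite rsum' one_entry.
have e1 : (Psi *m h1) i 0 = \sum_j Psi i j * h1 j 0 by rewrite mxE.
have le1 : \sum_j Psi i j * h1 j 0 <= \sum_j Psi i j.
  by apply: ler_sum => j _; rewrite ler_piMr.
have sum1 : \sum_j Psi i j = 1 by have := sPsi i; lra.
have z1 : forall j, Psi i j - Psi i j * h1 j 0 = 0.
  apply: sum_ge0_eq0.
    by move=> j; rewrite subr_ge0 ler_piMr.
  by rewrite sumrB; lra.
have hr : forall l, (one p - Psi *m one m) l 0 = 1 - \sum_j Psi l j.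
  by move=> l; rewrite mxE one_entry mxE rsum'.
set r := one p - Psi *m one m in Ric1 hr.
have r0 : forall l, 0 <= r l 0 by move=> l; rewrite hr subr_ge0.
have ri : r i 0 = 0 by rewrite hr sum1 subrr.
clearbody r.
have eR : (Tpp *m r) i 0 + (Psi *m (Tmp *m r)) i 0 = 0.
  by have := congr1 (fun X : 'cV[R]_p => X i 0) Ric1; rewrite /= mxE [RHS]mxE.
have t1 : 0 <= (Tpp *m r) i 0.
  rewrite mxE; apply: sumr_ge0 => l _; have [<-|ne] := eqVneq i l; first by rewrite ri mulr0.
  by rewrite mulr_ge0 // hTpp.
have nr : mx_nonneg r by move=> l k; rewrite (ord1 k); exact: r0.
have t2 : 0 <= (Psi *m (Tmp *m r)) i 0 by apply: nnM => //; exact: nnM.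
have z2' : (Psi *m (Tmp *m r)) i 0 = 0 by lra.
have z2 : forall j, Psi i j * (Tmp *m r) j 0 = 0.
  move: z2'; rewrite mxE => z2'; apply: (sum_ge0_eq0 _ z2') => j.
  by apply: mulr_ge0 => //; apply: nnM.
have [j hj] : exists j, 0 < Psi i j by apply: pick_pos => //; rewrite sum1 ltr01.
have hj1 : h1 j 0 = 1.
  have := z1 j; move/eqP; rewrite -{1}(mulr1 (Psi i j)) -mulrBr mulf_eq0 (gt_eqF hj) /=.
  by rewrite subr_eq0 eq_sym => /eqP.
have Fj : forall l, F j l = 0.
  apply: sum_ge0_eq0; first by move=> l; exact: nF.
  by have := hF1 j; rewrite hj1; lra.
have Tr0 : (Tmp *m r) j 0 = 0.
  by have /eqP := z2 j; rewrite mulf_eq0 (gt_eqF hj) /= => /eqP.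
have key : forall j', \sum_l Tmp j l * G l j' = 0 /\ (j == j')%:R + mu^-1 * Tmm j j' = 0.
  move=> j'; have := congr1 (fun X : 'M[R]_m => X j j') emm; rewrite /= !mxE Fj.
  set X := \sum_l _; set Y := \sum_l _ => h.
  have Xge : 0 <= X by apply: sumr_ge0 => l _; exact: mulr_ge0.
  have Yge : 0 <= Y.
    apply: sumr_ge0 => l _; have [<-|ne] := eqVneq j l; first by rewrite Fj mulr0.
    by rewrite mulr_ge0 // hTmm.
  have Rge : 0 <= (j == j')%:R + mu^-1 * Tmm j j'.
    have [<-|ne] := eqVneq j j'.
      rewrite mulr1n; have hd := Tdiag j.
      have -> : 1 + mu^-1 * Tmm j j = mu^-1 * (mu + Tmm j j) by rewrite mulrDr mulVf ?gt_eqF.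
      apply: mulr_ge0; [by rewrite invr_ge0 ltW | lra].
    rewrite mulr0n add0r; apply: mulr_ge0; [by rewrite invr_ge0 ltW | exact: hTmm].
  have a1 : 0 <= mu^-1 * X by rewrite mulr_ge0 // invr_ge0 ltW.
  have a2 : 0 <= lam^-1 * Y by rewrite mulr_ge0 // invr_ge0 ltW.
  have zX : mu^-1 * X = 0 by lra.
  split; last by lra.
  by apply/eqP; move/eqP: zX; rewrite mulf_eq0 invr_eq0 (gt_eqF hm).
have Tjj : Tmm j j = - mu.
  have := (key j).2; rewrite eqxx mulr1n => h.
  have : mu * (1 + mu^-1 * Tmm j j) = 0 by rewrite h mulr0.
  rewrite mulrDr mulr1 mulrA mulfV ?gt_eqF // mul1r => h2; lra.
have Tjo : forall j', j' != j -> Tmm j j' = 0.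
  move=> j' ne; have := (key j').2; rewrite eq_sym (negPf ne) mulr0n add0r => /eqP.
  by rewrite mulf_eq0 invr_eq0 (gt_eqF hm) /= => /eqP.
have sTmp : \sum_l Tmp j l = mu.
  have e : \sum_l Tmp j l + \sum_l Tmm j l = 0.
    by have := congr1 (fun X : 'cV[R]_m => X j 0) Trow; rewrite /= mxE !rsum' mxE.
  have e2 : \sum_l Tmm j l = - mu.
    by rewrite (bigD1 j) //= Tjj big1 ?addr0 // => j' /Tjo.
  lra.
have [l hl0] : exists l, 0 < Tmp j l by apply: pick_pos => //; rewrite sTmp.
have Gl : forall j', G l j' = 0.
  move=> j'; have := (key j').1 => hs.
  have := sum_ge0_eq0 (f := fun l => Tmp j l * G l j') (fun l => mulr_ge0 (nTmp _ _) (nG _ _)) hs l.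
  by move/eqP; rewrite mulf_eq0 (gt_eqF hl0) /= => /eqP.
have Psil := Sinv l Gl.
have rl : r l 0 = 1 by rewrite hr big1 ?subr0 // => j' _; exact: Psil.
move: Tr0; rewrite mxE => hs.
have := sum_ge0_eq0 (f := fun l => Tmp j l * r l 0) (fun l => mulr_ge0 (nTmp _ _) (r0 _)) hs l.
by rewrite /= rl mulr1 => h; move: hl0; rewrite h ltxx.
Qed.
End P4.


Lemma const_col (R : realType) a b c : const_mx (1 : R) = col_mx (const_mx 1 : 'M_(a,c)) (const_mx 1 : 'M_(b,c)).
Proof.
apply/matrixP => i j; rewrite mxE; case: (split_ordP i) => i' ->;
by rewrite ?col_mxEu ?col_mxEd mxE.
Qed.

Section Main.
Variables (R : realType) (p m : nat) (T : 'M[R]_(p + m)) (lam mu : R) (Psi : 'M[R]_(p, m)).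
Hypothesis genT : is_generator T.
Hypotheses (hl : 0 < lam) (hm : 0 < mu).
Hypotheses (Tl : forall i, `|T i i| <= lam) (Tm : forall i, `|T i i| <= mu).
Hypothesis hPsi : is_min_nonneg_sol
    (fun X : 'M[R]_(p, m) =>
       ursubmx T + X *m drsubmx T + ulsubmx T *m X + X *m dlsubmx T *m X) Psi.
Ltac fsolve5 := field; rewrite ?(lt0r_neq0 hm) ?(lt0r_neq0 hl) ?pnatr_eq0 ?andbT //.

Local Notation Tpp := (ulsubmx T).
Local Notation Tpm := (ursubmx T).
Local Notation Tmp := (dlsubmx T).
Local Notation Tmm := (drsubmx T).
Local Notation M := (EGHF lam mu T).
Local Notation E := (ulsubmx M).
Local Notation G := (ursubmx M).
Local Notation H := (dlsubmx M).
Local Notation F := (drsubmx M).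
Local Notation iA := (invmx (Amx T lam mu)).
Local Notation al := (usubmx iA).
Local Notation be := (dsubmx iA).
Local Notation Cc := (Cc T lam).
Local Notation Dc := (Dc T mu).
Local Notation one k := (const_mx 1 : 'cV[R]_k).

Lemma Mblk : M = block_mx (al *m Cc) (al *m Dc) (be *m Cc) (be *m Dc).
Proof. by rewrite (EGHFE genT hl hm Tl Tm) -{1}[iA]vsubmxK mul_col_row. Qed.
Lemma EE : E = al *m Cc. Proof. by rewrite Mblk block_mxKul. Qed.
Lemma GE : G = al *m Dc. Proof. by rewrite Mblk block_mxKur. Qed.
Lemma HE : H = be *m Cc. Proof. by rewrite Mblk block_mxKdl. Qed.
Lemma FE : F = be *m Dc. Proof. by rewrite Mblk block_mxKdr. Qed.

Lemma nniA : mx_nonneg iA. Proof. by case: (Amx_inv genT hl hm Tl Tm). Qed.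
Lemma unitA : Amx T lam mu \in unitmx. Proof. by case: (Amx_inv genT hl hm Tl Tm). Qed.
Lemma nnal : mx_nonneg al. Proof. exact: nn_u nniA. Qed.
Lemma nnbe : mx_nonneg be. Proof. exact: nn_d nniA. Qed.
Lemma nnPl : mx_nonneg (Pmx lam T). Proof. exact: nnPmx. Qed.
Lemma nnPm : mx_nonneg (Pmx mu T). Proof. exact: nnPmx. Qed.
Lemma nnCc : mx_nonneg Cc.
Proof. apply: nnZ; first by rewrite invr_ge0 ler0n. by apply: nn_col; [apply: nn_ul|apply: nn_dl]; exact: nnPl. Qed.
Lemma nnDc : mx_nonneg Dc.
Proof. apply: nnZ; first by rewrite invr_ge0 ler0n. by apply: nn_col; [apply: nn_ur|apply: nn_dr]; exact: nnPm. Qed.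
Lemma nnE : mx_nonneg E. Proof. rewrite EE; apply: nnM; [exact: nnal|exact: nnCc]. Qed.
Lemma nnG : mx_nonneg G. Proof. rewrite GE; apply: nnM; [exact: nnal|exact: nnDc]. Qed.
Lemma nnH : mx_nonneg H. Proof. rewrite HE; apply: nnM; [exact: nnbe|exact: nnCc]. Qed.
Lemma nnF : mx_nonneg F. Proof. rewrite FE; apply: nnM; [exact: nnbe|exact: nnDc]. Qed.

Lemma rsum a b (X : 'M[R]_(a,b)) i j : (X *m one b) i j = \sum_k X i k.
Proof. by rewrite mxE; apply: eq_bigr => k _; rewrite mxE mulr1. Qed.

Lemma sum_delta k (i : 'I_k) : \sum_j ((i == j)%:R : R) = 1.
Proof. by rewrite (bigD1 i) //= eqxx big1 ?addr0 // => j /negPf; rewrite eq_sym => ->. Qed.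

Lemma M1 : M *m one (p + m) = one (p + m).
Proof.
rewrite (EGHFE genT hl hm Tl Tm) -mulmxA.
have -> : row_mx Cc Dc *m one (p + m) = Amx T lam mu *m one (p + m).
  apply/matrixP => i j; rewrite !rsum.
  under [RHS]eq_bigr do rewrite AmxE.
  rewrite sumrB sum_delta.
  have := rowsum_C genT hl hm i.
  under eq_bigr do rewrite mxE [(C0d _ _ _ + _) _ _]mxE -addrA.
  rewrite big_split /= => h; rewrite -h addrC addrK.
  apply: eq_bigr => k _; rewrite C1_row Cm1_row.
  by case: (split_ordP k) => k' ->; rewrite ?row_mxEl ?row_mxEr !mxE ?addr0 ?add0r.
by rewrite mulKmx // unitA.
Qed.

Lemma HF1 : H *m one p + F *m one m = one m.
Proof.
have := M1; rewrite -{1}[M]submxK (const_col R p m 1) mul_block_col.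
by move/eq_col_mx => [_ ->].
Qed.

Lemma Pmx1 a : Pmx a T *m one (p + m) = one (p + m).
Proof. by apply/matrixP => i j; rewrite rsum rowsumPmx // mxE. Qed.

Lemma Plp1 : ulsubmx (Pmx lam T) *m one p + ursubmx (Pmx lam T) *m one m = one p.
Proof.
have := Pmx1 lam; rewrite -{1}[Pmx lam T]submxK (const_col R p m 1) mul_block_col.
by move/eq_col_mx => [-> _].
Qed.
Lemma Plm1 : dlsubmx (Pmx lam T) *m one p + drsubmx (Pmx lam T) *m one m = one m.
Proof.
have := Pmx1 lam; rewrite -{1}[Pmx lam T]submxK (const_col R p m 1) mul_block_col.
by move/eq_col_mx => [_ ->].
Qed.

Lemma nnPsi : mx_nonneg Psi. Proof. by case: hPsi. Qed.
Lemma RicPsi : Ric T Psi = 0. Proof. by case: hPsi. Qed.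
Lemma minPsi Y : mx_nonneg Y -> Ric T Y = 0 -> mx_le Psi Y.
Proof. by case: hPsi => _ _ h; apply: h. Qed.

Lemma fPsi_mono X Y : mx_nonneg X -> mx_le X Y -> mx_le (fPsi T lam X) (fPsi T lam Y).
Proof.
move=> nX le; have nY := nn_le_trans nX le.
have nPl := nnPl.
apply: leZ; first by rewrite invr_ge0 ler0n.
apply: leD; [apply: leD; [apply: leD|]|].
- exact: le_refl.
- by apply: le_mulr => //; exact: nn_dr.
- by apply: le_mull => //; exact: nn_ul.
- apply: le_mul2 => //.
  + by apply: nnM => //; exact: nn_dl.
  + by apply: le_mulr => //; exact: nn_dl.
Qed.

Lemma fPsi_nn X : mx_nonneg X -> mx_nonneg (fPsi T lam X).
Proof.
move=> nX; have nPl := nnPl; apply: nnZ; first by rewrite invr_ge0 ler0n.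
apply: nnD; [apply: nnD; [apply: nnD|]|].
- exact: nn_ur.
- by apply: nnM => //; exact: nn_dr.
- by apply: nnM => //; exact: nn_ul.
- by apply: nnM => //; apply: nnM => //; exact: nn_dl.
Qed.

Lemma fPsi_cont X L : mcvg X L -> mcvg (fun k => fPsi T lam (X k)) (fPsi T lam L).
Proof.
move=> h; apply: mcvgZ; apply: mcvgD; [apply: mcvgD; [apply: mcvgD|]|].
- exact: mcvg_cst.
- exact: mcvgMr.
- exact: mcvgMl.
- by apply: mcvgM => //; exact: mcvgMr.
Qed.

Lemma fPsi_fix : fPsi T lam Psi = Psi.
Proof. by rewrite (fPsiE _ hl) RicPsi scaler0 addr0. Qed.

Lemma Psi_lim : mcvg (fun k => iter k (fPsi T lam) 0) Psi.
Proof.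
have [L [hL nL leL fL]] := iter_lim fPsi_mono fPsi_nn fPsi_cont nnPsi fPsi_fix.
have -> : Psi = L; last by [].
apply: le_anti => //; apply: minPsi => //.
have := fPsiE T hl L; rewrite fL => /eqP; rewrite addrC -subr_eq subrr eq_sym scaler_eq0.
case/orP => [|/eqP //]; rewrite invr_eq0 mulf_eq0 pnatr_eq0 /= => /eqP hl0.
by move: hl; rewrite hl0 ltxx.
Qed.

Lemma Psi1 : mx_le (Psi *m one m) (one p).
Proof.
apply: (mcvg_le (@mcvgMr _ _ _ _ (one m) _ _ Psi_lim)) => k.
elim: k => [|k IH] /=; first by rewrite mul0mx => i j; rewrite !mxE ler01.
set Y := iter k _ 0 in IH *.
have nY : mx_nonneg Y.
  rewrite /Y; elim: k {IH Y} => [|k IHk] /=; [exact: nn0 | exact: fPsi_nn].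
have nPl := nnPl.
have e1 : mx_le (fPsi T lam Y *m one m)
   (2^-1 *: (ursubmx (Pmx lam T) *m one m + Y *m drsubmx (Pmx lam T) *m one m
        + ulsubmx (Pmx lam T) *m one p + Y *m dlsubmx (Pmx lam T) *m one p)).
  rewrite /fPsi -scalemxAl !mulmxDl.
  apply: leZ; first by rewrite invr_ge0 ler0n.
  apply: leD.
    apply: leD; first exact: le_refl.
    rewrite -!mulmxA; apply: le_mull => //; exact: nn_ul.
  rewrite -!mulmxA; apply: le_mull => //; apply: le_mull => //; exact: nn_dl.
apply: (le_trans e1).
have -> : ursubmx (Pmx lam T) *m one m + Y *m drsubmx (Pmx lam T) *m one m +
     ulsubmx (Pmx lam T) *m one p + Y *m dlsubmx (Pmx lam T) *m one p
     = one p + Y *m one m.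
  transitivity (ulsubmx (Pmx lam T) *m one p + ursubmx (Pmx lam T) *m one m +
     Y *m (dlsubmx (Pmx lam T) *m one p + drsubmx (Pmx lam T) *m one m)).
    by mxnorm; atomize; apply/matrixP => i j; rewrite !mxE; ring.
  by rewrite Plp1 Plm1.
move=> i j; have := IH i j; rewrite !mxE => h; lra.
Qed.

Lemma unitL : Lmat T lam mu \in unitmx.
Proof. by rewrite LmatE // unitmxZ ?unitA // unitfE pnatr_eq0. Qed.

Lemma LM : Lmat T lam mu *m M = Rmat T lam mu.
Proof. by rewrite /EGHF -/(Lmat T lam mu) -/(Rmat T lam mu) mulKVmx // unitL. Qed.

Lemma e_pm : G - mu^-1 *: (Tpp *m G) - lam^-1 *: (Tpm *m F) = mu^-1 *: Tpm.
Proof.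
have := LM; rewrite -{1}[M]submxK /Lmat /Rmat mulmx_block => /eq_block_mx [_ h _ _].
rewrite -h; mxnorm; atomize; apply/matrixP => i j; rewrite !mxE; ring.
Qed.

Lemma e_mm : - (mu^-1 *: (Tmp *m G)) + F - lam^-1 *: (Tmm *m F) = 1%:M + mu^-1 *: Tmm.
Proof.
have := LM; rewrite -{1}[M]submxK /Lmat /Rmat mulmx_block => /eq_block_mx [_ _ _ h].
rewrite -h; mxnorm; atomize; apply/matrixP => i j; rewrite !mxE; ring.
Qed.

Lemma Toff i j : i != j -> 0 <= T i j. Proof. by case: genT => h _; apply: h. Qed.
Lemma Tpp_off k l : k != l -> 0 <= Tpp k l. Proof. by move=> ne; rewrite !mxE Toff // eq_lshift. Qed.
Lemma Tmm_off k l : k != l -> 0 <= Tmm k l. Proof. by move=> ne; rewrite !mxE Toff // eq_rshift. Qed.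
Lemma nnTpm : mx_nonneg Tpm. Proof. by move=> k l; rewrite !mxE Toff // eq_lrshift. Qed.
Lemma nnTmp : mx_nonneg Tmp. Proof. by move=> k l; rewrite !mxE Toff // eq_rlshift. Qed.
Lemma Tmm_diag j : - mu <= Tmm j j.
Proof. by have := Tm (rshift p j); rewrite ler_norml !mxE => /andP[]. Qed.

Lemma T1 : T *m one (p + m) = 0.
Proof. by apply/matrixP => i j; rewrite rsum (rowsumT genT) mxE. Qed.
Lemma Trow_p : Tpp *m one p + Tpm *m one m = 0.
Proof.
have := T1; rewrite -{1}[T]submxK (const_col R p m 1) mul_block_col -(col_mx0 _ p m 1).
by move/eq_col_mx => [-> _].
Qed.
Lemma Trow_m : Tmp *m one p + Tmm *m one m = 0.
Proof.
have := T1; rewrite -{1}[T]submxK (const_col R p m 1) mul_block_col -(col_mx0 _ p m 1).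
by move/eq_col_mx => [_ ->].
Qed.

Lemma RicRow : Tpp *m (one p - Psi *m one m) + Psi *m (Tmp *m (one p - Psi *m one m)) = 0.
Proof.
have h := congr1 (fun X => X *m one m) RicPsi; rewrite /= mul0mx /Ric in h.
apply: oppr_inj; rewrite oppr0 -h; have ep := Trow_p; have em := Trow_m.
have ep' : Tpm *m one m = - (Tpp *m one p) by apply/eqP; rewrite -addr_eq0 addrC ep.
have em' : Tmm *m one m = - (Tmp *m one p) by apply/eqP; rewrite -addr_eq0 addrC em.
rewrite !mulmxDl -!mulmxA ep' em'.
mxnorm; atomize; apply/matrixP => i j; rewrite !mxE; ring.
Qed.

Lemma Sinv l : (forall j, G l j = 0) -> forall j, Psi l j = 0.
Proof.
have cl := closure_gen hm hl Tpp_off nnTpm nnG nnF e_pm.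
pose Inv (Y : 'M[R]_(p,m)) := forall k, (forall j, G k j = 0) -> forall j, Y k j = 0.
have inv : forall n, Inv (iter n (fPsi T lam) 0).
  elim=> [|n IH] /=; first by move=> k _ j; rewrite mxE.
  set Y := iter n _ 0 in IH *.
  move=> k hk j; have [hTpm hTpp] := cl k hk.
  rewrite /fPsi PmxB block_mxKul block_mxKur block_mxKdl block_mxKdr.
  have y0 : forall (c : nat) (Z : 'M[R]_(m, c)) j', (Y *m Z) k j' = 0.
    by move=> c Z j'; rewrite mxE big1 // => l' _; rewrite IH // mul0r.
  have a1 : (lam^-1 *: Tpm) k j = 0 by rewrite mxZ_entry hTpm mulr0.
  have a4 : (Y *m (lam^-1 *: Tmp) *m Y) k j = 0 by rewrite -mulmxA y0.
  have a3 : ((1%:M + lam^-1 *: Tpp) *m Y) k j = 0.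
    rewrite mxE big1 // => l' _; rewrite mxD_entry mxZ_entry.
    have [<-|ne] := eqVneq k l'; first by rewrite IH // mulr0.
    have [z|nz] := eqVneq (Tpp k l') 0.
      by rewrite z mulr0 addr0 mxE (negPf ne) mul0r.
    by rewrite (IH l' (hTpp l' nz)) mulr0.
  by rewrite mxZ_entry !mxD_entry a1 y0 a3 a4 !addr0 mulr0.
move=> hl0 j; apply: (mcvg_entry Psi_lim) => n; exact: inv.
Qed.

Lemma PsiH1 i : (Psi *m (H *m one p)) i 0 < 1.
Proof.
apply: (p4_gen hm hl nnPsi nnH nnF nnG nnTmp Tpp_off Tmm_off HF1 Psi1 RicRow Trow_m e_mm Tmm_diag Sinv).
Qed.

Lemma Winv (Y : 'M[R]_(p,m)) : mx_nonneg Y -> mx_le Y Psi ->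
  (1%:M - Y *m H) \in unitmx /\ mx_nonneg (invmx (1%:M - Y *m H)).
Proof.
move=> nY leY; apply: (@zmx_inv _ _ _ (one p)).
- move=> i j ne; rewrite !mxE (negPf ne) mulr0n sub0r oppr_le0.
  by apply: sumr_ge0 => l _; apply: mulr_ge0 => //; exact: nnH.
- by move=> i; rewrite mxE ltr01.
move=> i; rewrite mulmxBl mul1mx -mulmxA mxE [X in _ + X]mxE one_entry subr_gt0.
apply: Order.POrderTheory.le_lt_trans (PsiH1 i).
have : mx_le (Y *m (H *m one p)) (Psi *m (H *m one p)).
  by apply: le_mulr => //; apply: nnM; [exact: nnH | move=> a b; rewrite mxE ler01].
by move/(_ i 0).
Qed.

Lemma cinv (Y : 'M[R]_(p,m)) : mx_nonneg Y -> mx_le (Y *m one m) (one p) ->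
  cx T lam Y \in unitmx.
Proof.
move=> nY Y1; have [] // := (@zmx_inv _ _ (cx T lam Y) (one m)).
- move=> i j ne; rewrite /cx /Ux !mxE (negPf ne) mulr0n sub0r oppr_le0.
  apply: mulr_ge0; first by rewrite invr_ge0 ltW.
  apply: addr_ge0; last by have := Tmm_off ne; rewrite !mxE.
  by apply: sumr_ge0 => l _; apply: mulr_ge0 => //; exact: nnTmp.
- by move=> i; rewrite mxE ltr01.
move=> i.
have U1 : mx_le (Ux T Y *m one m) 0.
  rewrite /Ux mulmxDl -mulmxA.
  have -> : Tmm *m one m = - (Tmp *m one p) by apply/eqP; rewrite -addr_eq0 addrC Trow_m.
  move=> a b; rewrite !mxE.
  have := le_mull nnTmp Y1 a b; rewrite mxE [X in _ <= X]mxE => h.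
  by rewrite subr_le0.
rewrite /cx mulmxBl mul1mx -scalemxAl mxE [X in _ + X]mxE [X in _ - X]mxE one_entry.
have h : (Ux T Y *m one m) i 0 <= 0 by have := U1 i 0; rewrite [X in _ <= X]mxE.
have : 0 <= lam^-1 * - (Ux T Y *m one m) i 0.
  apply: mulr_ge0; [by rewrite invr_ge0 ltW | by rewrite oppr_ge0].
rewrite mulrN; lra.
Qed.

Local Notation Q0 := (invmx (cx T lam Psi) *m dx T mu Psi).
Lemma cPsi_unit : cx T lam Psi \in unitmx. Proof. exact: cinv nnPsi Psi1. Qed.
Lemma cQ : cx T lam Psi *m Q0 = dx T mu Psi.
Proof. by rewrite mulmxA mulmxV ?cPsi_unit // mul1mx. Qed.

Lemma Mcol (Y : 'M[R]_(p,m)) (Q : 'M[R]_m) :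
  Lmat T lam mu *m col_mx Y Q = Rmat T lam mu *m col_mx (Y *m Q) 1%:M ->
  M *m col_mx (Y *m Q) 1%:M = col_mx Y Q.
Proof.
move=> h; rewrite /EGHF -/(Lmat T lam mu) -/(Rmat T lam mu) -mulmxA -h.
by rewrite mulmxA mulVmx ?unitL // mul1mx.
Qed.

Lemma MPsi : M *m col_mx (Psi *m Q0) 1%:M = col_mx Psi Q0.
Proof.
apply: Mcol; apply/eqP; rewrite -subr_eq0; apply/eqP.
by rewrite (GEN _ hl hm) cQ subrr RicPsi mul0mx mulmx0 oppr0 addr0 col_mx0.
Qed.

Lemma EPQ : E *m (Psi *m Q0) + G = Psi.
Proof. by have := MPsi; rewrite -{1}[M]submxK mul_block_col !mulmx1 => /eq_col_mx [-> _]. Qed.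
Lemma HPQ : H *m (Psi *m Q0) + F = Q0.
Proof. by have := MPsi; rewrite -{1}[M]submxK mul_block_col !mulmx1 => /eq_col_mx [_ ->]. Qed.

Local Notation W := (invmx (1%:M - Psi *m H)).
Local Notation R1 := (E *m W).
Lemma unitW : (1%:M - Psi *m H) \in unitmx. Proof. by case: (Winv nnPsi (le_refl _)). Qed.
Lemma nnW : mx_nonneg W. Proof. by case: (Winv nnPsi (le_refl _)). Qed.
Lemma nnR1 : mx_nonneg R1. Proof. exact: nnM nnE nnW. Qed.

Lemma R1E : R1 *m (1%:M - Psi *m H) = E.
Proof. by rewrite -mulmxA mulVmx ?unitW // mulmx1. Qed.
Lemma R1fix : R1 = E + R1 *m Psi *m H.
Proof. by rewrite -{2}R1E mulmxBr mulmx1 mulmxA subrK. Qed.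
Lemma Psifix : Psi = G + R1 *m Psi *m F.
Proof.
have hF : F = Q0 - H *m (Psi *m Q0) by rewrite -[X in X - _]HPQ addrAC subrr add0r.
have e : R1 *m Psi *m (Q0 - H *m (Psi *m Q0)) = R1 *m (1%:M - Psi *m H) *m (Psi *m Q0).
  by mxnorm; atomize; apply/matrixP => i j; rewrite !mxE; ring.
by rewrite hF e R1E addrC EPQ.
Qed.

Local Notation Gs := (al + R1 *m Psi *m be).
Lemma GsCc : Gs *m Cc = R1.
Proof. by rewrite mulmxDl -!mulmxA -EE -HE !mulmxA -R1fix. Qed.
Lemma GsDc : Gs *m Dc = Psi.
Proof. by rewrite mulmxDl -!mulmxA -GE -FE !mulmxA -Psifix. Qed.
Lemma nnGs : mx_nonneg Gs.
Proof. apply: nnD; first exact: nnal. apply: nnM; last exact: nnbe. exact: nnM nnR1 nnPsi. Qed.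

Definition gmap (X : 'M[R]_(p, p + m)) := al + X *m Cc *m (X *m Dc) *m be.

Lemma g_mono X Y : mx_nonneg X -> mx_le X Y -> mx_le (gmap X) (gmap Y).
Proof.
move=> nX le; have nY := nn_le_trans nX le; apply: leD; first exact: le_refl.
apply: le_mulr; first exact: nnbe.
apply: le_mul2.
- exact: nnM nX nnCc.
- exact: nnM nY nnDc.
- exact: le_mulr nnCc le.
- exact: le_mulr nnDc le.
Qed.
Lemma g_nn X : mx_nonneg X -> mx_nonneg (gmap X).
Proof.
move=> nX; apply: nnD; first exact: nnal.
apply: nnM; last exact: nnbe.
by apply: nnM; [exact: nnM nX nnCc | exact: nnM nX nnDc].
Qed.
Lemma g_cont X L : mcvg X L -> mcvg (fun k => gmap (X k)) (gmap L).
Proof.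
move=> h; apply: mcvgD; first exact: mcvg_cst.
by apply: mcvgMr; apply: mcvgM; apply: mcvgMr.
Qed.
Lemma g_fix : gmap Gs = Gs.
Proof. by rewrite /gmap GsCc GsDc. Qed.

Lemma Ginf_ex : exists L, [/\ mcvg (fun k => iter k gmap 0) L, mx_nonneg L, mx_le L Gs & gmap L = L].
Proof. exact: iter_lim g_mono g_nn g_cont nnGs g_fix. Qed.

Lemma Ginf_eq L : mx_nonneg L -> mx_le L Gs -> gmap L = L -> L = Gs.
Proof.
move=> nL leL fL.
set h := L *m Cc; set k := L *m Dc.
have hfix : h = E + h *m k *m H.
  by rewrite /h -{1}fL /gmap mulmxDl EE -!mulmxA -HE.
have kfix : k = G + h *m k *m F.
  by rewrite /k -{1}fL /gmap mulmxDl GE -!mulmxA -FE.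
have nk : mx_nonneg k by exact: nnM nL nnDc.
have nh : mx_nonneg h by exact: nnM nL nnCc.
have kle : mx_le k Psi by rewrite -GsDc; exact: le_mulr nnDc leL.
have k1 : mx_le (k *m one m) (one p).
  apply: le_trans Psi1; apply: le_mulr kle; by move=> a b; rewrite mxE ler01.
have eL : L = al + h *m k *m be by rewrite -{1}fL.
clearbody h k.
have [uW' nW'] := Winv nk kle.
set W' := invmx (1%:M - k *m H) in nW'.
have eW : (1%:M - k *m H) *m W' = 1%:M by rewrite mulmxV.
clearbody W'.
have eE : E = h *m (1%:M - k *m H) by rewrite mulmxBr mulmx1 mulmxA {1}hfix addrK.
set Q' := F + H *m W' *m k *m F.
have eQ' : Q' = F + H *m W' *m k *m F by [].
clearbody Q'.
have eQ : (1%:M - H *m k) *m Q' = F.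
  transitivity (F - H *m k *m F + H *m ((1%:M - k *m H) *m W') *m k *m F).
    by rewrite eQ'; mxnorm; atomize; apply/matrixP => i j; rewrite !mxE; ring.
  by rewrite eW mulmx1 subrK.
have Mk : M *m col_mx (k *m Q') 1%:M = col_mx k Q'.
  rewrite -{1}[M]submxK mul_block_col !mulmx1; congr col_mx.
    have -> : E *m (k *m Q') = h *m k *m ((1%:M - H *m k) *m Q').
      by rewrite eE; mxnorm; atomize; apply/matrixP => i j; rewrite !mxE; ring.
    by rewrite eQ addrC -kfix.
  rewrite -eQ.
  by mxnorm; atomize; apply/matrixP => i j; rewrite !mxE; ring.
have LR : Lmat T lam mu *m col_mx k Q' - Rmat T lam mu *m col_mx (k *m Q') 1%:M = 0.
  by rewrite -Mk mulmxA LM subrr.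
rewrite (GEN _ hl hm) -(col_mx0 _ p m m) in LR.
case/eq_col_mx: LR => LR1 LR2.
rewrite LR2 mulmx0 subr0 in LR1.
move/eqP: LR1; rewrite oppr_eq0 => /eqP RX.
move/eqP: LR2; rewrite subr_eq0 => /eqP cQ'.
have uc : cx T lam k \in unitmx by exact: cinv.
set X := mu^-1 *: 1%:M + lam^-1 *: Q' in RX.
have cX : cx T lam k *m X = (mu^-1 + lam^-1) *: 1%:M.
  rewrite /X mulmxDr -!scalemxAr cQ' /cx /dx.
  by mxnorm; atomize; apply/matrixP => i j; rewrite !mxE; fsolve5.
have eX : X = (mu^-1 + lam^-1) *: invmx (cx T lam k).
  by rewrite -[X](mulKmx uc) cX -scalemxAr mulmx1.
have s0 : mu^-1 + lam^-1 != 0.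
  by rewrite gt_eqF // addr_gt0 // invr_gt0.
have Rk : Ric T k = 0.
  move: RX; rewrite eX -scalemxAr => /eqP; rewrite scaler_eq0 (negPf s0) /= => /eqP h0.
  by rewrite -[Ric T k](mulmxKV uc) h0 mul0mx.
have kPsi : k = Psi by apply: le_anti kle (minPsi nk Rk).
have hR1 : h = R1.
  rewrite eE kPsi mulmxK //; exact: unitW.
by rewrite eL hR1 kPsi.
Qed.

Lemma C1iA : C1d T lam *m iA = Cc *m al.
Proof. by rewrite C1_row -{1}[iA]vsubmxK mul_row_col mul0mx addr0. Qed.
Lemma Cm1iA : Cm1d T mu *m iA = Dc *m be.
Proof. by rewrite Cm1_row -{1}[iA]vsubmxK mul_row_col mul0mx add0r. Qed.

Lemma qbd_iff (X : 'M[R]_(p + m)) :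
  X *m X *m Cm1d T mu + X *m C0d T lam mu + C1d T lam - X = 0 <->
  X = Cc *m al + X *m X *m Dc *m be.
Proof.
split=> h.
  have e : X *m Amx T lam mu = X *m X *m Cm1d T mu + C1d T lam.
    apply/eqP; rewrite -subr_eq0 -oppr_eq0 -h /Amx; apply/eqP.
    by mxnorm; atomize; apply/matrixP => i j; rewrite !mxE; ring.
  rewrite -[LHS](mulmxK unitA) e mulmxDl C1iA -!mulmxA Cm1iA.
  by mxnorm; atomize; apply/matrixP => i j; rewrite !mxE; ring.
have e : X *m Amx T lam mu = X *m X *m Cm1d T mu + C1d T lam.
  rewrite {1}h -C1iA -mulmxA -Cm1iA mulmxDl -!mulmxA mulVmx ?unitA // !mulmx1.
  by rewrite !mulmxA addrC.
move: e; rewrite /Amx => e.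
have -> : X *m X *m Cm1d T mu + X *m C0d T lam mu + C1d T lam - X =
  (X *m X *m Cm1d T mu + C1d T lam) - X *m (1%:M - C0d T lam mu).
  by mxnorm; atomize; apply/matrixP => i j; rewrite !mxE; ring.
by rewrite e subrr.
Qed.

Lemma RC_eq (RC : 'M[R]_(p + m)) :
  is_min_nonneg_sol (fun X : 'M[R]_(p + m) => X *m X *m Cm1d T mu + X *m C0d T lam mu + C1d T lam - X) RC ->
  RC = Cc *m Gs.
Proof.
case=> nRC eRC minRC.
have fRC := (qbd_iff RC).1 eRC.
have nX : mx_nonneg (Cc *m Gs) by exact: nnM nnCc nnGs.
have eX : (Cc *m Gs) *m (Cc *m Gs) *m Cm1d T mu + (Cc *m Gs) *m C0d T lam mu + C1d T lam - Cc *m Gs = 0.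
  apply/qbd_iff.
  have -> : Cc *m Gs *m (Cc *m Gs) *m Dc *m be = Cc *m (Gs *m Cc) *m (Gs *m Dc) *m be.
    by rewrite !mulmxA.
  by rewrite GsCc GsDc mulmxDr !mulmxA.
apply: le_anti; first exact: minRC.
have [L [hL nL leL fL]] := Ginf_ex.
have LG := Ginf_eq nL leL fL; subst L.
apply: (mcvg_le (@mcvgMl _ _ _ _ Cc _ _ hL)) => n.
have nI : forall n, mx_nonneg (iter n gmap 0).
  by elim=> [|k IH] /=; [exact: nn0 | exact: g_nn].
elim: n => [|n IH] /=; first by rewrite mulmx0; apply/nn_le.
rewrite [in X in mx_le X _]/gmap mulmxDr fRC; apply: leD; first exact: le_refl.
have -> : Cc *m (iter n gmap 0 *m Cc *m (iter n gmap 0 *m Dc) *m be) =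
   (Cc *m iter n gmap 0) *m (Cc *m iter n gmap 0) *m Dc *m be by rewrite !mulmxA.
apply: le_mulr; first exact: nnbe.
apply: le_mulr; first exact: nnDc.
apply: le_mul2 => //; exact: nnM nnCc (nI n).
Qed.

Lemma Kfact (Wx : 'M[R]_m) :
  block_mx E 0 H 0 *m block_mx 1%:M (R1 *m Psi) 0 Wx = col_mx E H *m row_mx 1%:M (R1 *m Psi).
Proof.
by rewrite mulmx_block mul_col_row !mulmx0 !mul0mx !addr0.
Qed.

Lemma colEH : col_mx E H = iA *m Cc.
Proof. by rewrite EE HE -mul_col_mx vsubmxK. Qed.

Lemma formula (Wx : 'M[R]_m) :
  Amx T lam mu *m block_mx E 0 H 0 *m block_mx 1%:M (R1 *m Psi) 0 Wx *m iA = Cc *m Gs.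
Proof.
rewrite -(mulmxA (Amx T lam mu)) Kfact colEH !mulmxA mulmxV ?unitA // mul1mx.
by rewrite -mulmxA -{1}[iA]vsubmxK mul_row_col mul1mx ?mulmxA.
Qed.
End Main.
Section Spec.
Local Open Scope classical_set_scope.
Variable R : realType.
Local Notation C := (R[i]).
Local Notation f := (real_complex R).

Lemma eig_sim n (P K : 'M[C]_n) z : P \in unitmx ->
  eigenvalue (P *m K *m invmx P) z = eigenvalue K z.
Proof.
move=> uP; apply/eigenvalueP/eigenvalueP => [[v hv nv]|[w hw nw]].
  exists (v *m P).
    transitivity (v *m (P *m K *m invmx P) *m P); first by rewrite !mulmxA mulmxKV.
    by rewrite hv -scalemxAl.
  by apply: contra nv => /eqP h; rewrite -(mulmxK uP v) h mul0mx.
exists (w *m invmx P).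
  by rewrite !mulmxA mulmxKV // hw scalemxAl.
by apply: contra nw => /eqP h; rewrite -(mulmxKV uP w) h mul0mx.
Qed.

Lemma eig_swap n k (X : 'M[C]_(n,k)) (Y : 'M[C]_(k,n)) z : z != 0 ->
  eigenvalue (X *m Y) z -> eigenvalue (Y *m X) z.
Proof.
move=> nz /eigenvalueP [v hv nv]; apply/eigenvalueP; exists (v *m X).
  by rewrite mulmxA -(mulmxA v) hv -scalemxAl.
apply: contra nv => /eqP h.
have : z *: v = 0 by rewrite -hv mulmxA h mul0mx.
by move/eqP; rewrite scaler_eq0 (negPf nz).
Qed.

Lemma eig0 n k (X : 'M[C]_(n,k)) (Y : 'M[C]_(k,n)) : (k < n)%N -> eigenvalue (X *m Y) 0.
Proof.
move=> kn; have : kermx X != 0.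
  rewrite kermx_eq0 /row_free; apply/negP => /eqP h.
  by have := rank_leq_col X; rewrite h leqNgt kn.
case/matrix0Pn => i [j nij]; apply/eigenvalueP; exists (row i (kermx X)).
  by rewrite mulmxA -row_mul mulmx_ker row0 mul0mx scale0r.
by apply/matrix0Pn; exists 0, j; rewrite mxE.
Qed.

Lemma normc_ge0 (z : C) : 0 <= Normc.normc z.
Proof. by rewrite /Normc.normc; case: z => a b; exact: sqrtr_ge0. Qed.

Lemma sup_U0 (S : set R) : (forall r, S r -> 0 <= r) -> sup (S `|` [set 0]) = sup S.
Proof.
move=> h0.
case: (pselect (S = set0)) => [->|nS]; first by rewrite set0U sup1 sup0.
have [x Sx] : exists x, S x by apply/set0P/eqP.
case: (pselect (has_sup S)) => hs.
  by rewrite setUC sup_setU // => a b -> Sb; exact: h0.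
rewrite !sup_out //.
move=> [_ [u hu]]; apply: hs; split; first by exists x.
by exists u => y Sy; apply: hu; left.
Qed.

Lemma spec_main n k (P : 'M[R]_n) (X : 'M[R]_(n,k)) (Y : 'M[R]_(k,n)) :
  P \in unitmx -> (k < n)%N ->
  spectral_radius (P *m (X *m Y) *m invmx P) = spectral_radius (Y *m X).
Proof.
move=> uP kn; rewrite /spectral_radius.
have em : forall a b (A : 'M[R]_(a,b)), map_mx (fun x : R => x%:C%C) A = map_mx f A by [].
rewrite !em !map_mxM map_invmx.
have uP' : map_mx f P \in unitmx by rewrite map_unitmx.
rewrite -[in RHS]sup_U0; last by move=> r [z [_ ->]]; exact: normc_ge0.
congr sup; apply/seteqP; split => r.
  case=> z [hz ->]; rewrite eig_sim // in hz.
  case: (eqVneq z 0) => [->|nz]; first by right; rewrite /= expr0n /= addr0 sqrtr0.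
  by left; exists z; split => //; exact: eig_swap.
case=> [[z [hz ->]]|->].
  case: (eqVneq z 0) => [->|nz].
    by exists 0; split => //; rewrite eig_sim //; exact: eig0.
  by exists z; split => //; rewrite eig_sim //; exact: eig_swap.
by exists 0; split; [rewrite eig_sim //; exact: eig0 | rewrite /= expr0n /= addr0 sqrtr0].
Qed.
End Spec.

Unset Implicit Arguments.

Theorem theorem8 (R : realType) (p m : nat) (T : 'M[R]_(p + m))
    (Psi : 'M[R]_(p, m)) (lam mu : R) (RC : 'M[R]_(p + m)) :
  (0 < p)%N -> (0 < m)%N ->
  is_generator T ->
  is_min_nonneg_sol
    (fun X : 'M[R]_(p, m) =>
       ursubmx T + X *m drsubmx T + ulsubmx T *m X + X *m dlsubmx T *m X) Psi ->
  0 < lam -> 0 < mu ->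
  (forall i, `|T i i| <= lam) -> (forall i, `|T i i| <= mu) ->
  let Pl := Pmx lam T in
  let Pm := Pmx mu T in
  let M := EGHF lam mu T in
  let E := ulsubmx M in
  let H := dlsubmx M in
  let R1 := E *m invmx (1%:M - Psi *m H) in
  let Cm1 := 2^-1 *: block_mx 0 (ursubmx Pm) 0 (drsubmx Pm) in
  let C0 := 2^-1 *: block_mx (ulsubmx Pm) (ursubmx Pl)
                             (dlsubmx Pm) (drsubmx Pl) in
  let C1 := 2^-1 *: block_mx (ulsubmx Pl) 0 (dlsubmx Pl) 0 in
  is_min_nonneg_sol
    (fun X : 'M[R]_(p + m) => X *m X *m Cm1 + X *m C0 + C1 - X) RC ->
  RC = (1%:M - C0) *m block_mx E 0 H 0
         *m block_mx 1%:M (R1 *m Psi) 0 (invmx (1%:M - H *m Psi))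
         *m invmx (1%:M - C0)
  /\ spectral_radius RC = spectral_radius R1.
Proof.
move=> p0 m0 genT hPsi hl hm Tl Tm Pl Pm M E H R1 Cm1 C0 C1 hRC.
have hRC' : is_min_nonneg_sol (fun X : 'M[R]_(p + m) =>
   X *m X *m Cm1d T mu + X *m C0d T lam mu + C1d T lam - X) RC := hRC.
have eRC := RC_eq genT hl hm Tl Tm hPsi hRC'.
have eF := formula Psi genT hl hm Tl Tm (invmx (1%:M - H *m Psi)).
split.
  by rewrite eRC -eF.
rewrite eRC -eF -(mulmxA (Amx T lam mu)) Kfact.
rewrite spec_main; last by rewrite -{1}(addn0 p) ltn_add2l.
  by rewrite mul_row_col mul1mx -(R1fix genT hl hm Tl Tm hPsi).
exact: (unitA genT hl hm Tl Tm).
Qed.
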